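(* Let $G$ be a finite group acting linearly on a finite-dimensional complex vector space $V$, and fix a norm on $V$. Let $I\subseteq\mathbb{R}$ be an interval and $c:I\to V/\!\!/G=\sigma(V)\subseteq\mathbb{C}^n$ continuous. If $c$ admits a Lipschitz lift $\tilde c:I\to V$ (i.e. $\sigma\circ\tilde c=c$), then every continuous lift $\bar c:I\to V$ of $c$ is Lipschitz.
   Context: $\sigma=(\sigma_1,\dots,\sigma_n)$ where $\sigma_1,\dots,\sigma_n$ are homogeneous generators of the algebra $\mathbb{C}[V]^G$ of $G$-invariant polynomials; $V/\!\!/G$ is identified with $\sigma(V)\subseteq\mathbb{C}^n$. A lift of $c$ is a curve $\bar c$ in $V$ with $\sigma\circ\bar c=c$. *)

(* Defs.v *)
From Stdlib Require Import Reals List.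
Set Implicit Arguments.
Open Scope R_scope.

Definition Cx : Type := (R * R)%type.
Definition Cadd (z w : Cx) : Cx := (fst z + fst w, snd z + snd w).
Definition Cmul (z w : Cx) : Cx :=
  (fst z * fst w - snd z * snd w, fst z * snd w + snd z * fst w).
Definition Copp (z : Cx) : Cx := (- fst z, - snd z).
Definition Cmod (z : Cx) : R := sqrt (fst z ^ 2 + snd z ^ 2).
Fixpoint Cpow (z : Cx) (k : nat) : Cx :=
  match k with O => (1, 0) | S k' => Cmul z (Cpow z k') end.

Definition Fin (n : nat) : Type := { i : nat | (i < n)%nat }.
Definition Vec (n : nat) : Type := Fin n -> Cx.
Definition vzero (n : nat) : Vec n := fun _ => (0, 0).
Definition vadd n (v w : Vec n) : Vec n := fun i => Cadd (v i) (w i).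
Definition vscal n (a : Cx) (v : Vec n) : Vec n := fun i => Cmul a (v i).
Definition vsub n (v w : Vec n) : Vec n := fun i => Cadd (v i) (Copp (w i)).

Definition is_norm d (N : Vec d -> R) : Prop :=
  (forall v w, N (vadd v w) <= N v + N w) /\
  (forall a v, N (vscal a v) = Cmod a * N v) /\
  (forall v, N v = 0 -> v = @vzero d).

Definition is_group (G : Type) (mul : G -> G -> G) (e : G) (inv : G -> G) : Prop :=
  (forall x y z, mul x (mul y z) = mul (mul x y) z) /\
  (forall x, mul e x = x) /\ (forall x, mul x e = x) /\
  (forall x, mul (inv x) x = e) /\ (forall x, mul x (inv x) = e).

Definition is_finite (G : Type) : Prop := exists l : list G, forall g, In g l.

Definition linear_action (G : Type) (mul : G -> G -> G) (e : G) d
  (act : G -> Vec d -> Vec d) : Prop :=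
  (forall v, act e v = v) /\
  (forall g h v, act (mul g h) v = act g (act h v)) /\
  (forall g v w, act g (vadd v w) = vadd (act g v) (act g w)) /\
  (forall g a v, act g (vscal a v) = vscal a (act g v)).

Inductive Poly (d : nat) : Type :=
| PVar : Fin d -> Poly d
| PConst : Cx -> Poly d
| PAdd : Poly d -> Poly d -> Poly d
| PMul : Poly d -> Poly d -> Poly d.
Arguments PVar {d} _.
Arguments PConst {d} _.
Arguments PAdd {d} _ _.
Arguments PMul {d} _ _.

Fixpoint peval d (p : Poly d) (v : Vec d) : Cx :=
  match p with
  | PVar i => v i
  | PConst a => a
  | PAdd p q => Cadd (peval p v) (peval q v)
  | PMul p q => Cmul (peval p v) (peval q v)
  end.

Definition invariant (G : Type) d (act : G -> Vec d -> Vec d) (p : Poly d) : Prop :=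
  forall g v, peval p (act g v) = peval p v.

Definition homogeneous d (p : Poly d) : Prop :=
  exists k : nat, forall a v, peval p (vscal a v) = Cmul (Cpow a k) (peval p v).

Definition invariant_generators (G : Type) d n (act : G -> Vec d -> Vec d)
  (sgm : Fin n -> Poly d) : Prop :=
  (forall j, invariant act (sgm j) /\ homogeneous (sgm j)) /\
  (forall f : Poly d, invariant act f ->
     exists Q : Poly n, forall v, peval f v = peval Q (fun j => peval (sgm j) v)).

Definition sigma_map d n (sgm : Fin n -> Poly d) (v : Vec d) : Vec n :=
  fun j => peval (sgm j) v.

Definition is_interval (I : R -> Prop) : Prop :=
  forall a b x, I a -> I b -> a <= x <= b -> I x.

Definition continuous_on_norm d (N : Vec d -> R) (I : R -> Prop) (f : R -> Vec d) : Prop :=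
  forall t, I t -> forall eps, 0 < eps -> exists delta, 0 < delta /\
    forall s, I s -> Rabs (s - t) < delta -> N (vsub (f s) (f t)) < eps.

Definition continuous_on_coord n (I : R -> Prop) (f : R -> Vec n) : Prop :=
  forall j t, I t -> forall eps, 0 < eps -> exists delta, 0 < delta /\
    forall s, I s -> Rabs (s - t) < delta -> Cmod (Cadd (f s j) (Copp (f t j))) < eps.

Definition lipschitz_on d (N : Vec d -> R) (I : R -> Prop) (f : R -> Vec d) : Prop :=
  exists L : R, forall s t, I s -> I t -> N (vsub (f s) (f t)) <= L * Rabs (s - t).

Definition is_lift d n (sgm : Fin n -> Poly d) (I : R -> Prop) (c : R -> Vec n)
  (f : R -> Vec d) : Prop :=
  forall t, I t -> sigma_map sgm (f t) = c t.

(* Main.v *)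
Require Import Defs.
From Stdlib Require Import Reals Lra Lia Psatz Arith List Permutation FinFun Classical ClassicalEpsilon FunctionalExtensionality.
Open Scope R_scope.
Set Implicit Arguments.


Ltac cxd := repeat match goal with z : Cx |- _ => destruct z end.
Ltac cx := cxd; unfold Cadd, Cmul, Copp in *; simpl; f_equal; ring.

Lemma vext d (u v : Vec d) : (forall i, u i = v i) -> u = v.
Proof. intro H; apply functional_extensionality; exact H. Qed.

Lemma fin_eq d (i j : Fin d) : proj1_sig i = proj1_sig j -> i = j.
Proof. destruct i as [i hi], j as [j hj]; simpl; intros ->. f_equal; apply le_unique. Qed.

Lemma Cmod_nonneg z : 0 <= Cmod z.
Proof. unfold Cmod; apply sqrt_pos. Qed.

Lemma Cmod_0 : Cmod (0,0) = 0.
Proof. unfold Cmod; cbn [fst snd]. replace (0^2+0^2) with 0 by ring. apply sqrt_0. Qed.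

Lemma Cmod_m1 : Cmod (-1,0) = 1.
Proof. unfold Cmod; cbn [fst snd]. replace ((-1)^2+0^2) with 1 by ring. apply sqrt_1. Qed.

Lemma Cmod_le_abs z : Cmod z <= Rabs (fst z) + Rabs (snd z).
Proof.
  destruct z as [x y]; unfold Cmod; simpl.
  assert (0 <= Rabs x + Rabs y) by (pose proof (Rabs_pos x); pose proof (Rabs_pos y); lra).
  rewrite <- (sqrt_Rsqr (Rabs x + Rabs y)) by auto.
  apply sqrt_le_1_alt. unfold Rsqr.
  assert (0 <= Rabs x * Rabs y) by (apply Rmult_le_pos; apply Rabs_pos).
  assert (Rabs x * Rabs x = x*x). { rewrite <- Rabs_mult. apply Rabs_pos_eq. nra. }
  assert (Rabs y * Rabs y = y*y). { rewrite <- Rabs_mult. apply Rabs_pos_eq. nra. }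
  nra.
Qed.

Lemma fst_le_Cmod z : Rabs (fst z) <= Cmod z.
Proof.
  destruct z as [x y]; unfold Cmod; simpl.
  rewrite <- sqrt_Rsqr_abs. apply sqrt_le_1_alt. unfold Rsqr. nra.
Qed.
Lemma snd_le_Cmod z : Rabs (snd z) <= Cmod z.
Proof.
  destruct z as [x y]; unfold Cmod; simpl.
  rewrite <- sqrt_Rsqr_abs. apply sqrt_le_1_alt. unfold Rsqr. nra.
Qed.

Definition Cinv (z : Cx) : Cx :=
  (fst z / (fst z ^ 2 + snd z ^ 2), - snd z / (fst z ^ 2 + snd z ^ 2)).

Lemma Cnz z : z <> (0,0) -> fst z ^ 2 + snd z ^ 2 <> 0.
Proof. destruct z as [x y]; simpl; intros H E. apply H. f_equal; nra. Qed.

Lemma Cmul_inv_r z : z <> (0,0) -> Cmul z (Cinv z) = (1,0).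
Proof.
  intro H; pose proof (Cnz H). destruct z as [x y]; unfold Cmul, Cinv in *; cbn [fst snd] in *.
  f_equal; field; auto.
Qed.

Lemma Cmul_inv_l z w : z <> (0,0) -> Cmul z (Cmul (Cinv z) w) = w.
Proof.
  intro H; pose proof (Cmul_inv_r H).
  transitivity (Cmul (Cmul z (Cinv z)) w). { cxd; unfold Cmul; simpl; f_equal; ring. }
  rewrite H0. cx.
Qed.

Section NormB.
Variable d : nat.
Variable N : Vec d -> R.
Hypothesis HN : is_norm N.

Lemma N_scal a (v : Vec d) : N (vscal a v) = Cmod a * N v.
Proof. destruct HN as [_ [H _]]; apply H. Qed.
Lemma N_tri (v w : Vec d) : N (vadd v w) <= N v + N w.
Proof. destruct HN as [H _]; apply H. Qed.
Lemma N_def (v : Vec d) : N v = 0 -> v = @vzero d.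
Proof. destruct HN as [_ [_ H]]; apply H. Qed.

Lemma vzero_scal : @vzero d = vscal (0,0) (@vzero d).
Proof. apply vext; intro i; unfold vscal, vzero; cx. Qed.

Lemma N_zero : N (@vzero d) = 0.
Proof. rewrite vzero_scal, N_scal, Cmod_0; ring. Qed.

Lemma N_nonneg (v : Vec d) : 0 <= N v.
Proof.
  assert (E : @vzero d = vadd v (vscal (-1,0) v)) by (apply vext; intro i; unfold vadd, vscal, vzero; cx).
  pose proof (N_tri v (vscal (-1,0) v)). rewrite <- E, N_zero, N_scal, Cmod_m1 in H. lra.
Qed.

Lemma vsub_eq (v w : Vec d) : vsub v w = vadd v (vscal (-1,0) w).
Proof. apply vext; intro i; unfold vsub, vadd, vscal; cx. Qed.

Lemma N_sub_le (v w : Vec d) : N (vsub v w) <= N v + N w.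
Proof. rewrite vsub_eq. eapply Rle_trans; [apply N_tri|]. rewrite N_scal, Cmod_m1; lra. Qed.

Lemma N_sub_sym (v w : Vec d) : N (vsub v w) = N (vsub w v).
Proof.
  replace (vsub v w) with (vscal (-1,0) (vsub w v)).
  - rewrite N_scal, Cmod_m1; ring.
  - apply vext; intro i; unfold vsub, vscal; cx.
Qed.

Lemma N_sub_tri (u v w : Vec d) : N (vsub u w) <= N (vsub u v) + N (vsub v w).
Proof.
  replace (vsub u w) with (vadd (vsub u v) (vsub v w)). apply N_tri.
  apply vext; intro i; unfold vsub, vadd; cx.
Qed.

Lemma N_sub_self (v : Vec d) : N (vsub v v) = 0.
Proof. replace (vsub v v) with (@vzero d). apply N_zero. apply vext; intro i; unfold vsub, vzero; cx. Qed.
End NormB.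


Definition coord d (w : Vec d) (k : nat) : Cx :=
  match lt_dec k d with left h => w (exist _ k h) | right _ => (0,0) end.

Lemma coord_fin d (w : Vec d) (i : Fin d) : coord w (proj1_sig i) = w i.
Proof.
  unfold coord. destruct (lt_dec (proj1_sig i) d) as [h|h].
  - f_equal. apply fin_eq. reflexivity.
  - destruct i; simpl in h; lia.
Qed.

Lemma coord_out d (w : Vec d) k : (d <= k)%nat -> coord w k = (0,0).
Proof. intro H. unfold coord. destruct (lt_dec k d); [lia|auto]. Qed.

Definition ebas d (k : nat) : Vec d := fun i => if Nat.eqb (proj1_sig i) k then (1,0) else (0,0).
Definition trunc d (w : Vec d) (k : nat) : Vec d :=
  fun i => if Nat.ltb (proj1_sig i) k then w i else (0,0).

Lemma trunc_0 d (w : Vec d) : trunc w 0 = @vzero d.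
Proof. apply vext; intro i; unfold trunc, vzero. reflexivity. Qed.

Lemma trunc_d d (w : Vec d) : trunc w d = w.
Proof. apply vext; intro i; unfold trunc. destruct i as [i hi]; simpl.
  replace (Nat.ltb i d) with true; auto. symmetry; apply Nat.ltb_lt; auto. Qed.

Lemma trunc_S d (w : Vec d) k : trunc w (S k) = vadd (trunc w k) (vscal (coord w k) (@ebas d k)).
Proof.
  apply vext; intro i; unfold trunc, vadd, vscal, ebas.
  destruct (Nat.ltb_spec (proj1_sig i) (S k)); destruct (Nat.ltb_spec (proj1_sig i) k);
  destruct (Nat.eqb_spec (proj1_sig i) k); try lia.
  - destruct (w i); destruct (coord w k); cx.
  - rewrite <- e, coord_fin. destruct (w i); cx.
  - destruct (coord w k); cx.
Qed.

Definition lin d (A : Vec d -> Vec d) : Prop :=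
  (forall v w, A (vadd v w) = vadd (A v) (A w)) /\ (forall a v, A (vscal a v) = vscal a (A v)).

Lemma lin_zero d (A : Vec d -> Vec d) : lin A -> A (@vzero d) = @vzero d.
Proof.
  intros [_ H]. rewrite (vzero_scal d), H. apply vext; intro i; unfold vscal, vzero; cx.
Qed.

Lemma lin_sub d (A : Vec d -> Vec d) v w : lin A -> A (vsub v w) = vsub (A v) (A w).
Proof.
  intros [H1 H2]. rewrite !vsub_eq, H1, H2. reflexivity.
Qed.

Lemma lin_id d : lin (fun v : Vec d => v).
Proof. split; auto. Qed.

Lemma lin_trunc d (A : Vec d -> Vec d) w k : lin A ->
  A (trunc w (S k)) = vadd (A (trunc w k)) (vscal (coord w k) (A (@ebas d k))).
Proof. intros [H1 H2]. rewrite trunc_S, H1, H2. reflexivity. Qed.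

Fixpoint rsum (f : nat -> R) (k : nat) : R :=
  match k with O => 0 | S k' => rsum f k' + f k' end.

Lemma rsum_le f g k : (forall j, (j < k)%nat -> f j <= g j) -> rsum f k <= rsum g k.
Proof. induction k; simpl; intros H. lra. pose proof (H k ltac:(lia)). assert (rsum f k <= rsum g k) by (apply IHk; intros; apply H; lia). lra. Qed.

Lemma rsum_scal c f k : rsum (fun j => c * f j) k = c * rsum f k.
Proof. induction k; simpl. ring. rewrite IHk; ring. Qed.

Lemma rsum_nonneg f k : (forall j, 0 <= f j) -> 0 <= rsum f k.
Proof. induction k; simpl; intros H. lra. pose proof (H k). pose proof (IHk H). lra. Qed.

Lemma N_upper d (N : Vec d -> R) (HN : is_norm N) (A : Vec d -> Vec d) (HA : lin A) w :
  N (A w) <= rsum (fun j => Cmod (coord w j) * N (A (@ebas d j))) d.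
Proof.
  rewrite <- (trunc_d w) at 1.
  generalize d at 2 5. intro k. induction k; simpl.
  - rewrite trunc_0, lin_zero, N_zero; auto; lra.
  - rewrite lin_trunc by auto. eapply Rle_trans; [apply (N_tri HN)|].
    rewrite (N_scal HN). lra.
Qed.


Lemma inv_small eps : 0 < eps -> exists M, forall m, (M <= m)%nat -> / (INR m + 1) < eps.
Proof.
  intro He. destruct (INR_archimed eps 1 He) as [M HM]. exists M. intros m Hm.
  assert (INR M <= INR m) by (apply le_INR; auto).
  assert (Hx : 0 < INR m + 1) by (pose proof (pos_INR m); lra).
  pose proof (Rinv_r (INR m + 1) ltac:(lra)). pose proof (Rinv_0_lt_compat _ Hx).
  set (y := / (INR m + 1)) in *. nra.
Qed.

Lemma inv_pos m : 0 < / (INR m + 1).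
Proof. apply Rinv_0_lt_compat. pose proof (pos_INR m); lra. Qed.

Lemma cauchy_from_bound (x : nat -> R) B : 0 <= B ->
  (forall m p, Rabs (x m - x p) <= B * (/ (INR m + 1) + / (INR p + 1))) -> Cauchy_crit x.
Proof.
  intros HB H eps He. destruct (@inv_small (eps / (2 * (B + 1)))) as [M HM].
  { apply Rdiv_lt_0_compat; lra. }
  exists M. intros n m Hn Hm. unfold R_dist.
  pose proof (HM n Hn). pose proof (HM m Hm). pose proof (H n m).
  assert (B * (eps / (2 * (B + 1))) * 2 < eps).
  { replace (B * (eps / (2 * (B + 1))) * 2) with (eps * (B / (B+1))) by (field; lra).
    assert (B / (B+1) < 1). { apply Rmult_lt_reg_r with (B+1). lra. unfold Rdiv. rewrite Rmult_assoc, Rinv_l by lra. lra. }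
    nra. }
  nra.
Qed.

Lemma finsum_conv (f : nat -> nat -> R) n eps :
  (forall j, (j < n)%nat -> exists M, forall m, (M <= m)%nat -> f m j <= eps) ->
  exists M, forall m, (M <= m)%nat -> rsum (f m) n <= INR n * eps.
Proof.
  induction n; intros H.
  - exists O. intros; simpl; lra.
  - destruct IHn as [M1 H1]. { intros; apply H; lia. }
    destruct (H n ltac:(lia)) as [M2 H2]. exists (max M1 M2). intros m Hm.
    simpl rsum. rewrite S_INR. pose proof (H1 m ltac:(lia)). pose proof (H2 m ltac:(lia)). lra.
Qed.

Lemma cv_const (x : nat -> R) : (forall m, x m = 0) -> Un_cv x 0.
Proof. intros H eps He. exists O. intros; rewrite H. unfold R_dist. rewrite Rminus_0_r, Rabs_R0. auto. Qed.

Definition Sk d (k : nat) (w : Vec d) : Prop := forall i : Fin d, (k <= proj1_sig i)%nat -> w i = (0,0).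

Section Delta.
Variable d : nat.
Variable N : Vec d -> R.
Hypothesis HN : is_norm N.

Lemma delta_lemma k (hk : (k < d)%nat) B (HB0 : 0 <= B)
  (HB : forall u, Sk k u -> forall i, Cmod (u i) <= B * N u) :
  exists del, 0 < del /\ forall u, Sk k u -> del <= N (vadd (@ebas d k) u).
Proof.
  apply NNPP; intro Hno.
  set (e := @ebas d k).
  assert (Hs : forall m : nat, exists u, Sk k u /\ N (vadd e u) < / (INR m + 1)).
  { intro m. apply NNPP; intro Hm. apply Hno. exists (/ (INR m + 1)). split. apply inv_pos.
    intros u Hu. apply Rnot_lt_le. intro Hlt. apply Hm. eauto. }
  pose (u := fun m => proj1_sig (constructive_indefinite_description _ (Hs m))).
  assert (Hu : forall m, Sk k (u m) /\ N (vadd e (u m)) < / (INR m + 1)).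
  { intro m; unfold u; destruct constructive_indefinite_description; simpl; auto. }
  assert (Hb : forall m p i, Cmod (vsub (u m) (u p) i) <= B * (/ (INR m + 1) + / (INR p + 1))).
  { intros m p i. destruct (Hu m) as [Sm Nm]; destruct (Hu p) as [Sp Np].
    eapply Rle_trans. apply HB.
    { intros j hj. unfold vsub. rewrite (Sm j hj), (Sp j hj). cx. }
    apply Rmult_le_compat_l; auto.
    replace (vsub (u m) (u p)) with (vsub (vadd e (u m)) (vadd e (u p))).
    - pose proof (N_sub_le HN (vadd e (u m)) (vadd e (u p))). lra.
    - apply vext; intro j; unfold vsub, vadd. cx. }
  assert (Hcx : forall i, Cauchy_crit (fun m => fst (u m i))).
  { intro i. apply (cauchy_from_bound _ HB0). intros m p.
    eapply Rle_trans; [|apply (Hb m p i)].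
    eapply Rle_trans; [|apply fst_le_Cmod]. unfold vsub, Cadd, Copp; simpl; unfold Rminus; apply Rle_refl. }
  assert (Hcy : forall i, Cauchy_crit (fun m => snd (u m i))).
  { intro i. apply (cauchy_from_bound _ HB0). intros m p.
    eapply Rle_trans; [|apply (Hb m p i)].
    eapply Rle_trans; [|apply snd_le_Cmod]. unfold vsub, Cadd, Copp; simpl; unfold Rminus; apply Rle_refl. }
  pose (lx := fun i => proj1_sig (R_complete _ (Hcx i))).
  pose (ly := fun i => proj1_sig (R_complete _ (Hcy i))).
  assert (Hlx : forall i, Un_cv (fun m => fst (u m i)) (lx i)).
  { intro i; unfold lx; destruct R_complete; simpl; auto. }
  assert (Hly : forall i, Un_cv (fun m => snd (u m i)) (ly i)).
  { intro i; unfold ly; destruct R_complete; simpl; auto. }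
  pose (us := (fun i => (lx i, ly i)) : Vec d).
  assert (Hlx0 : forall i : Fin d, (k <= proj1_sig i)%nat -> lx i = 0 /\ ly i = 0).
  { intros i hi. split.
    - apply (UL_sequence (fun m => fst (u m i))); auto. apply cv_const. intro m.
      destruct (Hu m) as [Sm _]. rewrite (Sm i hi). reflexivity.
    - apply (UL_sequence (fun m => snd (u m i))); auto. apply cv_const. intro m.
      destruct (Hu m) as [Sm _]. rewrite (Sm i hi). reflexivity. }
  assert (Hsmall : forall eps, 0 < eps -> N (vadd e us) <= eps).
  { intros eps He.
    set (eps' := eps / (2 * (INR d + 1))).
    assert (He' : 0 < eps') by (unfold eps'; apply Rdiv_lt_0_compat; [lra| pose proof (pos_INR d); lra]).
    destruct (@finsum_conv (fun m j => Cmod (coord (vsub us (u m)) j) * N (@ebas d j)) d eps')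
      as [M1 H1].
    { intros j hj. set (jj := exist (fun j => (j < d)%nat) j hj : Fin d).
      set (c := eps' / (2 * (N (@ebas d j) + 1))).
      assert (Hne := N_nonneg HN (@ebas d j)).
      assert (Hc : 0 < c) by (unfold c; apply Rdiv_lt_0_compat; lra).
      destruct (Hlx jj c Hc) as [Ma Ha]. destruct (Hly jj c Hc) as [Mb Hb'].
      exists (max Ma Mb). intros m Hm.
      change (coord (vsub us (u m)) j) with (coord (vsub us (u m)) (proj1_sig jj)); rewrite coord_fin.
      pose proof (Ha m ltac:(lia)) as A1. pose proof (Hb' m ltac:(lia)) as A2. unfold R_dist in A1, A2.
      assert (A3: Cmod (vsub us (u m) jj) <= Rabs (fst (u m jj) - lx jj) + Rabs (snd (u m jj) - ly jj)).
      { eapply Rle_trans; [apply Cmod_le_abs|]. unfold vsub, us, Cadd, Copp; simpl.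
        rewrite (Rabs_minus_sym (fst _)), (Rabs_minus_sym (snd _)). unfold Rminus; lra. }
      assert (Cmod (vsub us (u m) jj) <= 2 * c) by lra.
      assert (2 * c * N (@ebas d j) <= eps').
      { unfold c. replace (2 * (eps' / (2 * (N (@ebas d j) + 1))) * N (@ebas d j))
          with (eps' * (N (@ebas d j) / (N (@ebas d j) + 1))) by (field; lra).
        assert (N (@ebas d j) / (N (@ebas d j) + 1) <= 1).
        { apply Rmult_le_reg_r with (N (@ebas d j) + 1). lra. unfold Rdiv.
          rewrite Rmult_assoc, Rinv_l by lra. lra. }
        nra. }
      pose proof (Cmod_nonneg (vsub us (u m) jj)). nra. }
    destruct (@inv_small (eps / 2)) as [M2 H2]. lra.
    set (m := max M1 M2).
    replace (vadd e us) with (vadd (vadd e (u m)) (vsub us (u m))).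
    2: { apply vext; intro j; unfold vadd, vsub. cx. }
    eapply Rle_trans. apply (N_tri HN).
    pose proof (N_upper HN (lin_id d) (vsub us (u m))) as U. simpl in U.
    pose proof (H1 m ltac:(unfold m; lia)) as V.
    pose proof (H2 m ltac:(unfold m; lia)).
    destruct (Hu m) as [_ W].
    assert (INR d * eps' <= eps / 2).
    { unfold eps'. pose proof (pos_INR d).
      replace (INR d * (eps / (2 * (INR d + 1)))) with (eps / 2 * (INR d / (INR d + 1))) by (field; lra).
      assert (INR d / (INR d + 1) <= 1).
      { apply Rmult_le_reg_r with (INR d + 1). lra. unfold Rdiv.
        rewrite Rmult_assoc, Rinv_l by lra. lra. }
      nra. }
    lra. }
  assert (H0 : N (vadd e us) = 0).
  { pose proof (N_nonneg HN (vadd e us)).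
    destruct (Req_dec (N (vadd e us)) 0); auto.
    pose proof (Hsmall (N (vadd e us) / 2) ltac:(lra)). lra. }
  apply (N_def HN) in H0.
  set (kk := exist (fun j => (j < d)%nat) k hk : Fin d).
  assert (E := f_equal (fun v => fst (v kk)) H0). simpl in E.
  unfold vadd, e, ebas, us, vzero, Cadd in E. simpl in E.
  rewrite Nat.eqb_refl in E. simpl in E.
  destruct (Hlx0 kk (le_n k)) as [A _]. simpl in A. rewrite A in E. lra.
Qed.
End Delta.


Section Hard.
Variable d : nat.
Variable N : Vec d -> R.
Hypothesis HN : is_norm N.

Lemma Pk k : exists B, 0 <= B /\ forall u, Sk k u -> forall i, Cmod (u i) <= B * N u.
Proof.
  induction k.
  - exists 0. split. lra. intros u Hu i. rewrite (Hu i ltac:(lia)), Cmod_0.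
    pose proof (N_nonneg HN u); lra.
  - destruct IHk as [B [HB0 HB]].
    destruct (le_lt_dec d k) as [hdk|hk].
    + exists B. split; auto. intros u Hu. apply HB. intros i hi.
      destruct i as [i hi']; simpl in *. lia.
    + destruct (delta_lemma HN hk HB0 HB) as [del [Hdel Hd]].
      set (e := @ebas d k).
      set (kk := exist (fun j => (j < d)%nat) k hk : Fin d).
      assert (Hne := N_nonneg HN e).
      exists (/ del + B * (1 + N e * / del)).
      assert (0 < / del) by (apply Rinv_0_lt_compat; auto).
      split. { pose proof (Rmult_le_pos _ _ Hne (Rlt_le _ _ H)). nra. }
      intros u Hu.
      set (a := u kk).
      set (w' := vsub u (vscal a e)).
      assert (Sw : Sk k w').
      { intros i hi. unfold w', vsub, vscal, e, ebas.
        destruct (Nat.eqb_spec (proj1_sig i) k).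
        - assert (i = kk) by (apply fin_eq; auto). subst i. unfold a. destruct (u kk); cx.
        - rewrite (Hu i ltac:(lia)). cx. }
      assert (Hnu := N_nonneg HN u).
      assert (C1 : Cmod a * del <= N u).
      { destruct (classic (a = (0,0))) as [Ha|Ha].
        - rewrite Ha, Cmod_0. lra.
        - assert (Eu : u = vscal a (vadd e (vscal (Cinv a) w'))).
          { apply vext; intro i. unfold vscal, vadd.
            transitivity (Cadd (Cmul a (e i)) (Cmul a (Cmul (Cinv a) (w' i)))).
            2: { destruct (e i), (Cmul (Cinv a) (w' i)); cx. }
            rewrite Cmul_inv_l by auto. unfold w', vsub, vscal. destruct (u i), (e i), a; cx. }
          rewrite Eu. rewrite (N_scal HN).
          assert (Sk k (vscal (Cinv a) w')).
          { intros i hi. unfold vscal. rewrite (Sw i hi). cx. }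
          pose proof (Hd _ H0). apply Rmult_le_compat_l. apply Cmod_nonneg. exact H1. }
      assert (C2 : N w' <= N u + Cmod a * N e).
      { unfold w'. rewrite <- (N_scal HN). apply (N_sub_le HN). }
      assert (Ca : Cmod a <= N u * / del).
      { apply Rmult_le_reg_r with del; auto. rewrite Rmult_assoc, Rinv_l by lra. lra. }
      assert (Eq : (/ del + B * (1 + N e * / del)) * N u = / del * N u + B * N u + B * N e * (N u * / del)) by ring.
      rewrite Eq.
      assert (0 <= B * N e) by (apply Rmult_le_pos; auto).
      assert (0 <= B * N u) by (apply Rmult_le_pos; auto).
      assert (0 <= N u * / del) by (apply Rmult_le_pos; lra).
      intro i. destruct (Nat.eqb_spec (proj1_sig i) k).
      * assert (i = kk) by (apply fin_eq; auto). subst i. fold a.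
        assert (B * N e * Cmod a >= 0) by (pose proof (Cmod_nonneg a); nra).
        nra.
      * assert (Hui : u i = w' i).
        { unfold w', vsub, vscal, e, ebas. destruct (Nat.eqb_spec (proj1_sig i) k); [lia|].
          destruct (u i); cx. }
        rewrite Hui. pose proof (HB _ Sw i).
        assert (B * N w' <= B * (N u + Cmod a * N e)) by (apply Rmult_le_compat_l; auto).
        assert (B * N e * Cmod a <= B * N e * (N u * / del)) by (apply Rmult_le_compat_l; auto).
        nra.
Qed.

Lemma hard_bound : exists B, 0 <= B /\ forall w i, Cmod (w i) <= B * N w.
Proof.
  destruct (Pk d) as [B [HB0 HB]]. exists B; split; auto. intros w. apply HB.
  intros [i hi] h; simpl in h; lia.
Qed.

Lemma op_bound (A : Vec d -> Vec d) : lin A -> exists C, 0 <= C /\ forall w, N (A w) <= C * N w.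
Proof.
  intro HA. destruct hard_bound as [B [HB0 HB]].
  exists (B * rsum (fun j => N (A (@ebas d j))) d). split.
  { apply Rmult_le_pos; auto. apply rsum_nonneg. intro; apply (N_nonneg HN). }
  intro w. eapply Rle_trans. apply (N_upper HN HA).
  eapply Rle_trans. apply rsum_le with (g := fun j => (B * N w) * N (A (@ebas d j))).
  { intros j hj. apply Rmult_le_compat_r. apply (N_nonneg HN).
    set (jj := exist (fun j => (j < d)%nat) j hj : Fin d).
    change (coord w j) with (coord w (proj1_sig jj)). rewrite coord_fin. apply HB. }
  rewrite rsum_scal. right; ring.
Qed.
End Hard.


Definition pvarn d (k : nat) : Poly d :=
  match lt_dec k d with left h => PVar (exist _ k h) | right _ => PConst (0,0) end.

Lemma peval_pvarn d k (v : Vec d) : peval (pvarn d k) v = coord v k.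
Proof. unfold pvarn, coord. destruct (lt_dec k d); reflexivity. Qed.

Fixpoint psum d (f : nat -> Poly d) (k : nat) : Poly d :=
  match k with O => PConst (0,0) | S k' => PAdd (psum f k') (f k') end.

Definition pcomp d (A : Vec d -> Vec d) (i : Fin d) : Poly d :=
  psum (fun k => PMul (pvarn d k) (PConst (A (@ebas d k) i))) d.

Lemma peval_pcomp d (A : Vec d -> Vec d) (HA : lin A) i v : peval (pcomp A i) v = A v i.
Proof.
  unfold pcomp. rewrite <- (trunc_d v) at 2.
  assert (forall k, peval (psum (fun k => PMul (pvarn d k) (PConst (A (@ebas d k) i))) k) v = A (trunc v k) i); [|auto].
  intro k. induction k; simpl.
  - rewrite trunc_0, lin_zero by auto. reflexivity.
  - rewrite lin_trunc by auto. rewrite IHk, peval_pvarn. reflexivity.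
Qed.

Fixpoint psubst d (p : Poly d) (s : Fin d -> Poly d) : Poly d :=
  match p with
  | PVar i => s i
  | PConst a => PConst a
  | PAdd p q => PAdd (psubst p s) (psubst q s)
  | PMul p q => PMul (psubst p s) (psubst q s)
  end.

Lemma peval_psubst d (p : Poly d) s v : peval (psubst p s) v = peval p (fun i => peval (s i) v).
Proof. induction p; simpl; congruence. Qed.

Definition pprod d (l : list (Poly d)) : Poly d := fold_right (@PMul d) (PConst (1,0)) l.
Definition cprod (l : list Cx) : Cx := fold_right Cmul (1,0) l.

Lemma peval_pprod d (l : list (Poly d)) v : peval (pprod l) v = cprod (map (fun p => peval p v) l).
Proof. induction l; simpl; auto. rewrite <- IHl. reflexivity. Qed.

Lemma cprod_perm l l' : Permutation l l' -> cprod l = cprod l'.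
Proof.
  induction 1; simpl; auto.
  - rewrite IHPermutation; auto.
  - unfold cprod; simpl. destruct (fold_right Cmul (1,0) l); cx.
  - congruence.
Qed.

Lemma cprod_zero l : In (0,0) l -> cprod l = (0,0).
Proof.
  unfold cprod. induction l; simpl; [tauto|]. intros [->|H].
  - destruct (fold_right Cmul (1,0) l); cx.
  - rewrite IHl by auto. cx.
Qed.

Lemma cprod_one l : (forall z, In z l -> z = (1,0)) -> cprod l = (1,0).
Proof.
  unfold cprod. induction l; simpl; auto. intro H. rewrite IHl by auto. rewrite (H a) by auto. cx.
Qed.

Lemma exists_nodup A (l : list A) : exists l', NoDup l' /\ forall x, In x l <-> In x l'.
Proof.
  induction l.
  - exists nil. split. constructor. simpl; tauto.
  - destruct IHl as [l' [H1 H2]]. destruct (classic (In a l')).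
    + exists l'. split; auto. intro x; simpl. rewrite H2. split; [intros [<-|]|]; auto.
    + exists (a :: l'). split. constructor; auto. intro x; simpl. rewrite H2. tauto.
Qed.

Section Sep.
Variables (G : Type) (mul : G -> G -> G) (e : G) (inv : G -> G).
Hypothesis HG : is_group mul e inv.
Hypothesis Hfin : is_finite G.
Variables (d n : nat) (act : G -> Vec d -> Vec d).
Hypothesis Hact : linear_action mul e act.
Variable sgm : Fin n -> Poly d.
Hypothesis Hsgm : invariant_generators act sgm.

Lemma act_lin g : lin (act g).
Proof. destruct Hact as [_ [_ [H1 H2]]]. split; auto. Qed.
Lemma act_e v : act e v = v.
Proof. destruct Hact as [H _]; auto. Qed.
Lemma act_mul g h v : act (mul g h) v = act g (act h v).
Proof. destruct Hact as [_ [H _]]; auto. Qed.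

Lemma separate x y : sigma_map sgm x = sigma_map sgm y -> exists g, y = act g x.
Proof.
  intro Hs. apply NNPP; intro Hno.
  destruct HG as [Hass [He1 [He2 [Hil Hir]]]].
  destruct Hfin as [l0 Hl0]. destruct (exists_nodup l0) as [L [HL HLin]].
  assert (HL' : forall g, In g L) by (intro g; apply HLin; auto).
  assert (Hne : forall g h, act g x <> act h y).
  { intros g h E. apply Hno. exists (mul (inv h) g). rewrite act_mul, E, <- act_mul, Hil, act_e. reflexivity. }
  assert (Hidx : forall gh : G * G, exists i, act (fst gh) x i <> act (snd gh) y i).
  { intro gh. apply not_all_ex_not. intro H. apply (Hne (fst gh) (snd gh)). apply vext; auto. }
  pose (idx := fun gh => proj1_sig (constructive_indefinite_description _ (Hidx gh))).
  assert (Hidx' : forall gh, act (fst gh) x (idx gh) <> act (snd gh) y (idx gh)).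
  { intro gh; unfold idx; destruct constructive_indefinite_description; auto. }
  pose (gx := fun gh => act (fst gh) x (idx gh)).
  pose (hy := fun gh => act (snd gh) y (idx gh)).
  pose (qpoly := fun gh => PMul (PAdd (PVar (idx gh)) (PConst (Copp (gx gh))))
                             (PConst (Cinv (Cadd (hy gh) (Copp (gx gh))))) : Poly d).
  pose (rpoly := fun g => PAdd (PConst (1,0)) (PMul (PConst (-1,0))
       (pprod (map (fun h => PAdd (PConst (1,0)) (PMul (PConst (-1,0)) (qpoly (g,h)))) L))) : Poly d).
  pose (p := pprod (map rpoly L)).
  assert (Pa : forall g, peval p (act g x) = (0,0)).
  { intro g. unfold p. rewrite peval_pprod. apply cprod_zero. apply in_map_iff.
    exists (rpoly g). split; [|apply in_map; auto]. unfold rpoly. simpl. rewrite peval_pprod.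
    rewrite cprod_one. cx.
    intros z Hz. apply in_map_iff in Hz. destruct Hz as [q [<- Hq]].
    apply in_map_iff in Hq. destruct Hq as [h [<- _]]. simpl. unfold gx; simpl.
    set (c := Cinv _). destruct (act g x (idx (g, h))), c; cx. }
  assert (Pb : forall h, peval p (act h y) = (1,0)).
  { intro h. unfold p. rewrite peval_pprod. apply cprod_one.
    intros z Hz. apply in_map_iff in Hz. destruct Hz as [q [<- Hq]].
    apply in_map_iff in Hq. destruct Hq as [g [<- _]].
    unfold rpoly. simpl. rewrite peval_pprod. rewrite cprod_zero. cx.
    apply in_map_iff. exists (PAdd (PConst (1,0)) (PMul (PConst (-1,0)) (qpoly (g,h)))).
    split; [| apply in_map_iff; exists h; auto].
    simpl. fold (hy (g,h)).
    rewrite Cmul_inv_r. cx.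
    intro E. apply (Hidx' (g,h)). fold (gx (g,h)) (hy (g,h)).
    destruct (gx (g,h)) as [a1 a2], (hy (g,h)) as [b1 b2]. unfold Cadd, Copp in E. simpl in E.
    injection E; intros. f_equal; lra. }
  pose (pk := fun k => psubst p (fun i => pcomp (act k) i)).
  pose (f := pprod (map pk L)).
  assert (Fv : forall v, peval f v = cprod (map (fun k => peval p (act k v)) L)).
  { intro v. unfold f. rewrite peval_pprod, map_map. f_equal. apply map_ext. intro k.
    unfold pk. rewrite peval_psubst. f_equal. apply vext. intro i. apply peval_pcomp, act_lin. }
  assert (Finv : invariant act f).
  { intros g v. rewrite !Fv.
    replace (map (fun k => peval p (act k (act g v))) L)
      with (map (fun k => peval p (act k v)) (map (fun k => mul k g) L)).
    - apply cprod_perm. apply Permutation_map. apply NoDup_Permutation; auto.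
      + apply Injective_map_NoDup; auto. intros a b E.
        rewrite <- (He2 a), <- (He2 b), <- (Hir g), !Hass, E. reflexivity.
      + intro z; split; intros _; auto. apply in_map_iff. exists (mul z (inv g)). split; auto.
        rewrite <- Hass, Hil, He2. reflexivity.
    - rewrite map_map. apply map_ext. intro k. rewrite act_mul. reflexivity. }
  destruct Hsgm as [_ Hgen]. destruct (Hgen f Finv) as [Q HQ].
  assert (E : peval f x = peval f y).
  { rewrite !HQ. change (fun j => peval (sgm j) x) with (sigma_map sgm x). rewrite Hs. reflexivity. }
  rewrite !Fv in E. rewrite cprod_zero in E.
  - rewrite cprod_one in E.
    + injection E; intros; lra.
    + intros z Hz. apply in_map_iff in Hz. destruct Hz as [k [<- _]]. apply Pb.
  - apply in_map_iff. exists e. split; [apply Pa | auto].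
Qed.
End Sep.


Lemma unif_pos (A : Type) (P : A -> Prop) (F : A -> R) (l : list A) :
  (forall a, P a -> 0 < F a) -> exists rho, 0 < rho /\ forall a, In a l -> P a -> rho <= F a.
Proof.
  intro H. induction l.
  - exists 1. split. lra. simpl; tauto.
  - destruct IHl as [r [Hr Hr']]. destruct (classic (P a)) as [Pa|Pa].
    + exists (Rmin r (F a)). split. apply Rmin_pos; auto.
      intros b [<-|Hb] Pb. apply Rmin_r. eapply Rle_trans. apply Rmin_l. auto.
    + exists r. split; auto. intros b [<-|Hb] Pb. tauto. auto.
Qed.

Lemma unif_bound (A : Type) (P : A -> R -> Prop) (l : list A) :
  (forall a, exists C, 0 <= C /\ P a C) -> (forall a C C', C <= C' -> P a C -> P a C') ->
  exists C, 0 <= C /\ forall a, In a l -> P a C.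
Proof.
  intros H Hm. induction l.
  - exists 0. split. lra. simpl; tauto.
  - destruct IHl as [C [HC HC']]. destruct (H a) as [Ca [Ha Ha']].
    exists (Rmax C Ca). split. eapply Rle_trans; [apply HC|apply Rmax_l].
    intros b [<-|Hb]. apply Hm with Ca; auto. apply Rmax_r. apply Hm with C; auto. apply Rmax_l.
Qed.

Section Lip.
Variables (G : Type) (d n : nat) (act : G -> Vec d -> Vec d) (sgm : Fin n -> Poly d).
Variable N : Vec d -> R.
Hypothesis HN : is_norm N.
Hypothesis Hlin : forall g, lin (act g).
Variable C : R.
Hypothesis HC0 : 0 <= C.
Hypothesis HC : forall g w, N (act g w) <= C * N w.
Hypothesis Hsep : forall x y, sigma_map sgm x = sigma_map sgm y -> exists g, y = act g x.
Hypothesis Hrho : forall v, exists rho, 0 < rho /\ forall g h, act g v <> act h v ->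
   rho <= N (vsub (act g v) (act h v)).
Variable I : R -> Prop.
Hypothesis HI : is_interval I.
Variables (c : R -> Vec n) (ct cb : R -> Vec d).
Hypothesis Hct : is_lift sgm I c ct.
Hypothesis Hcb : is_lift sgm I c cb.
Hypothesis Hcbc : continuous_on_norm N I cb.
Variable K : R.
Hypothesis HK0 : 0 <= K.
Hypothesis HK : forall s t, I s -> I t -> N (vsub (ct s) (ct t)) <= K * Rabs (s - t).

Lemma local r0 : I r0 -> exists eta, 0 < eta /\ forall r, I r -> Rabs (r - r0) < eta ->
  N (vsub (cb r) (cb r0)) <= C * K * Rabs (r - r0).
Proof.
  intro Hr0. set (v := ct r0).
  destruct (@Hsep (ct r0) (cb r0)) as [h Hh]. { rewrite Hct, Hcb; auto. }
  destruct (Hrho v) as [rho [Hrho0 Hrho']].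
  destruct (@Hcbc r0 Hr0 (rho / 2) ltac:(lra)) as [d1 [Hd1 Hd1']].
  set (M := C * K). assert (HM : 0 <= M) by (apply Rmult_le_pos; auto).
  exists (Rmin d1 (rho / (2 * (M + 1)))). split.
  { apply Rmin_pos; auto. apply Rdiv_lt_0_compat; lra. }
  intros r Hr Hrr.
  assert (Hrr1 : Rabs (r - r0) < d1) by (eapply Rlt_le_trans; [apply Hrr|apply Rmin_l]).
  assert (Hrr2 : Rabs (r - r0) < rho / (2 * (M + 1))) by (eapply Rlt_le_trans; [apply Hrr|apply Rmin_r]).
  destruct (@Hsep (ct r) (cb r)) as [g Hg]. { rewrite Hct, Hcb; auto. }
  assert (Hk : N (act g (vsub (ct r) v)) <= M * Rabs (r - r0)).
  { eapply Rle_trans. apply HC. unfold M. rewrite Rmult_assoc. apply Rmult_le_compat_l; auto. apply HK; auto. }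
  destruct (classic (act g v = act h v)) as [Eq|Neq].
  - rewrite Hg, Hh. fold v. rewrite <- Eq, <- lin_sub by auto. exact Hk.
  - exfalso. pose proof (Hrho' g h Neq) as R1.
    pose proof (N_sub_tri HN (act g v) (act g (ct r)) (act h v)) as R2.
    rewrite (N_sub_sym HN (act g v) (act g (ct r))), <- lin_sub in R2 by auto.
    pose proof (Hd1' r Hr Hrr1) as R3. rewrite Hg, Hh in R3.
    assert (M * Rabs (r - r0) < rho / 2).
    { assert (M * Rabs (r - r0) <= M * (rho / (2 * (M + 1)))) by (apply Rmult_le_compat_l; lra).
      assert (M * (rho / (2 * (M + 1))) < rho / 2).
      { replace (M * (rho / (2 * (M + 1)))) with (rho / 2 * (M / (M + 1))) by (field; lra).
        assert (M / (M + 1) < 1). { apply Rmult_lt_reg_r with (M + 1). lra. unfold Rdiv.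
          rewrite Rmult_assoc, Rinv_l by lra. lra. }
        nra. }
      lra. }
    fold v in R3. lra.
Qed.

Lemma global s t : I s -> I t -> s <= t -> N (vsub (cb t) (cb s)) <= C * K * (t - s).
Proof.
  intros Hs Ht Hst. set (M := C * K).
  assert (HIn : forall r, s <= r <= t -> I r) by (intros r Hr; apply (@HI s t r); auto).
  set (P := fun r => N (vsub (cb r) (cb s)) <= M * (r - s)).
  set (E := fun r => s <= r <= t /\ forall r', s <= r' <= r -> P r').
  assert (Es : E s).
  { split. lra. intros r' Hr'. replace r' with s by lra. unfold P. rewrite (N_sub_self HN). lra. }
  destruct (completeness E) as [m [Hub Hlub]].
  { exists t. intros x [Hx _]. lra. }
  { exists s; auto. }
  assert (Hsm : s <= m) by (apply Hub; auto).
  assert (Hmt : m <= t) by (apply Hlub; intros x [Hx _]; lra).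
  assert (A : forall r', s <= r' < m -> P r').
  { intros r' Hr'. apply NNPP; intro HP.
    assert (is_upper_bound E r').
    { intros x [Hx Hx']. apply Rnot_lt_le. intro Hlt. apply HP. apply Hx'. lra. }
    pose proof (Hlub r' H). lra. }
  assert (B : P m).
  { destruct (Req_dec m s) as [Ems|Nms].
    - rewrite Ems. unfold P. rewrite (N_sub_self HN). lra.
    - destruct (local (HIn m ltac:(lra))) as [eta [Heta Hl]].
      set (r' := Rmax s (m - eta / 2)).
      assert (Hr'1 : s <= r') by apply Rmax_l.
      assert (Hr'2 : r' < m) by (unfold r'; apply Rmax_lub_lt; lra).
      assert (Hr'3 : m - eta / 2 <= r') by apply Rmax_r.
      pose proof (A r' ltac:(lra)) as Pr.
      pose proof (Hl r' (HIn r' ltac:(lra)) ltac:(rewrite Rabs_left by lra; lra)) as L1.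
      rewrite Rabs_left in L1 by lra. rewrite (N_sub_sym HN) in L1.
      unfold P in *. eapply Rle_trans. apply (N_sub_tri HN _ (cb r')). fold M in L1. nra. }
  assert (Em : m = t).
  { apply NNPP; intro Nmt.
    destruct (local (HIn m ltac:(lra))) as [eta [Heta Hl]].
    set (r'' := Rmin t (m + eta / 2)).
    assert (H1 : r'' <= t) by apply Rmin_l.
    assert (H2 : m < r'') by (unfold r''; apply Rmin_glb_lt; lra).
    assert (H3 : r'' <= m + eta / 2) by apply Rmin_r.
    assert (E r'').
    { split. lra. intros r' Hr'. destruct (Rle_lt_dec r' m).
      - destruct (Req_dec r' m). subst r'; auto. apply A; lra.
      - pose proof (Hl r' (HIn r' ltac:(lra)) ltac:(rewrite Rabs_right by lra; lra)) as L1.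
        rewrite Rabs_right in L1 by lra.
        unfold P in *. eapply Rle_trans. apply (N_sub_tri HN _ (cb m)). fold M in L1. nra. }
    pose proof (Hub _ H). lra. }
  rewrite <- Em. exact B.
Qed.

Lemma lip_cb : lipschitz_on N I cb.
Proof.
  exists (C * K). intros s t Hs Ht. destruct (Rle_lt_dec s t).
  - rewrite (N_sub_sym HN). rewrite Rabs_left1 by lra. replace (- (s - t)) with (t - s) by ring.
    apply global; auto.
  - rewrite Rabs_right by lra. apply global; auto; lra.
Qed.
End Lip.


Unset Implicit Arguments.

Theorem lemma5p3 (d n : nat) (G : Type) (mul : G -> G -> G) (e : G) (inv : G -> G)
  (HG : is_group mul e inv) (Hfin : is_finite G)
  (act : G -> Vec d -> Vec d) (Hact : linear_action mul e act)
  (sgm : Fin n -> Poly d) (Hsgm : invariant_generators act sgm)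
  (N : Vec d -> R) (HN : is_norm N)
  (I : R -> Prop) (HI : is_interval I)
  (c : R -> Vec n) (Hc : continuous_on_coord I c)
  (ct : R -> Vec d) (Hct : is_lift sgm I c ct) (Hctl : lipschitz_on N I ct)
  (cb : R -> Vec d) (Hcb : is_lift sgm I c cb) (Hcbc : continuous_on_norm N I cb) :
  lipschitz_on N I cb.
Proof.
  assert (Hlin : forall g, lin (act g)).
  { intro g. destruct Hact as [_ [_ [H1 H2]]]. split; auto. }
  pose proof Hfin as [l0 Hl0].
  destruct (@unif_bound G (fun g C => forall w, N (act g w) <= C * N w) l0) as [C [HC0 HC]].
  { intro g. apply (op_bound HN (Hlin g)). }
  { intros g C1 C2 HC12 H w. eapply Rle_trans. apply H. apply Rmult_le_compat_r; auto. apply (N_nonneg HN). }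
  assert (Hrho : forall v, exists rho, 0 < rho /\ forall g h, act g v <> act h v ->
     rho <= N (vsub (act g v) (act h v))).
  { intro v. destruct (@unif_pos (G * G) (fun gh => act (fst gh) v <> act (snd gh) v)
       (fun gh => N (vsub (act (fst gh) v) (act (snd gh) v))) (list_prod l0 l0)) as [rho [Hr Hr']].
    { intros [g h] Hne. simpl in *. pose proof (N_nonneg HN (vsub (act g v) (act h v))).
      destruct (Req_dec (N (vsub (act g v) (act h v))) 0) as [E|E]; [|lra].
      exfalso. apply Hne. apply (N_def HN) in E. apply vext. intro i.
      pose proof (f_equal (fun w => w i) E) as Ei. unfold vsub, vzero, Cadd, Copp in Ei. simpl in Ei.
      destruct (act g v i), (act h v i). simpl in Ei. injection Ei; intros. f_equal; lra. }
    exists rho. split; auto. intros g h Hne. apply (Hr' (g, h)); auto. apply in_prod; auto. }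
  destruct Hctl as [K HK].
  apply (@lip_cb G d n act sgm N HN Hlin C HC0 (fun g w => HC g (Hl0 g) w)
           (@separate G mul e inv HG Hfin d n act Hact sgm Hsgm) Hrho I HI c ct cb Hct Hcb Hcbc (Rabs K) (Rabs_pos K)).
  intros s t Hs Ht. eapply Rle_trans. apply HK; auto. apply Rmult_le_compat_r. apply Rabs_pos. apply RRle_abs.
Qed.
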